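(* Let $\{|j\rangle\}_{j=1}^n$ be a fixed orthonormal (reference) basis of an $n$-dimensional Hilbert space, and let $Z_1,\dots,Z_n$ be Hermitian operators, all diagonal in the reference basis, with $\operatorname{tr}Z_jZ_k=\delta_{jk}$. Define, for a state $\rho$, \[ \mathcal{C}(\rho):=\min_{\{p_l,|\psi_l\rangle\}}\sum_lp_l\,\mathcal{F}_1\Big(e^{i\sum_j\theta_jZ_j}|\psi_l\rangle\langle\psi_l|e^{-i\sum_j\theta_jZ_j}\Big), \] the minimum over all ensemble decompositions $\rho=\sum_lp_l|\psi_l\rangle\langle\psi_l|$. Then for every state $\rho$, \[ 0\le\mathcal{C}(\rho)\le\frac{4(n-1)}{n^2}, \] and the upper bound is attained by $\rho=|\psi\rangle\langle\psi|$ with $|\psi\rangle=\frac1{\sqrt n}\sum_{j=1}^ne^{i\phi_j}|j\rangle$ for arbitrary real phases $\phi_j$.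
   Context: The arithmetic-mean QFI of a family $\varrho_\theta$, $\theta\in\mathbb{R}^n$, is $\mathcal{F}_1(\varrho_\theta):=\frac1n\operatorname{tr}F(\varrho_\theta)$, with $F$ the SLD-based QFI matrix $[F]_{jk}=\operatorname{Re}\operatorname{tr}(L_jL_k\varrho_\theta)$, $L_j$ Hermitian with $\partial_j\varrho_\theta=(L_j\varrho_\theta+\varrho_\theta L_j)/2$. *)

(* Defs.v *)
From mathcomp Require Import all_boot all_order all_algebra.
From mathcomp Require Import complex.
From mathcomp Require Import classical_sets boolp reals normedtype derive trigo.
Import numFieldNormedType.Exports.
Import GRing.Theory Num.Theory.

Set Implicit Arguments.
Unset Strict Implicit.
Unset Printing Implicit Defensive.

Local Open Scope ring_scope.

Section QFI.
Variable R : realType.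
Local Notation C := R[i].

Definition adjmx (m p : nat) (A : 'M[C]_(m, p)) : 'M[C]_(p, m) :=
  \matrix_(i, j) (A j i)^*.

Definition expi (t : R) : C := (cos t +i* sin t)%C.

(* exp(i H) for a Hermitian H that is diagonal in the reference basis:
   the diagonal matrix with entries e^{i H_kk} (H_kk real). *)
Definition expi_diag (n : nat) (H : 'M[C]_n) : 'M[C]_n :=
  diag_mx (\row_k expi (complex.Re (H k k))).

Definition gen (n : nat) (Z : 'I_n -> 'M[C]_n) (th : 'I_n -> R) : 'M[C]_n :=
  \sum_j ((th j)%:C)%C *: Z j.

Definition fam (n : nat) (Z : 'I_n -> 'M[C]_n) (psi : 'cV[C]_n)
  (th : 'I_n -> R) : 'M[C]_n :=
  let U := expi_diag (gen Z th) in U *m (psi *m adjmx psi) *m adjmx U.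

Definition upd (n : nat) (th : 'I_n -> R) (j : 'I_n) (t : R) : 'I_n -> R :=
  fun i => if i == j then th i + t else th i.

Definition pderiv (n : nat) (F : ('I_n -> R) -> 'M[C]_n) (th : 'I_n -> R)
  (j : 'I_n) : 'M[C]_n :=
  \matrix_(a, b)
    (derive1 (fun t : R => complex.Re (F (upd th j t) a b)) 0
     +i* derive1 (fun t : R => complex.Im (F (upd th j t) a b)) 0)%C.

Definition is_SLD (n : nat) (rho drho L : 'M[C]_n) : Prop :=
  adjmx L = L /\ drho = 2^-1 *: (L *m rho + rho *m L).

(* a chosen SLD (the QFI does not depend on the choice) *)
Definition SLD (n : nat) (rho drho : 'M[C]_n) : 'M[C]_n :=
  xget 0 [set L | is_SLD rho drho L].

Definition QFImx (n : nat) (F : ('I_n -> R) -> 'M[C]_n) (th : 'I_n -> R)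
  : 'M[R]_n :=
  \matrix_(j, k) complex.Re (\tr (SLD (F th) (pderiv F th j)
                                  *m SLD (F th) (pderiv F th k) *m F th)).

Definition QFI1 (n : nat) (F : ('I_n -> R) -> 'M[C]_n) (th : 'I_n -> R) : R :=
  n%:R^-1 * \tr (QFImx F th).

Definition is_state (n : nat) (rho : 'M[C]_n) : Prop :=
  [/\ adjmx rho = rho,
      (forall v : 'cV[C]_n, 0 <= (adjmx v *m rho *m v) 0 0)
    & \tr rho = 1].

Definition is_ensemble (n : nat) (rho : 'M[C]_n) (k : nat) (p : 'I_k -> R)
  (psi : 'I_k -> 'cV[C]_n) : Prop :=
  [/\ forall l, 0 <= p l,
      \sum_l p l = 1,
      forall l, adjmx (psi l) *m psi l = 1%:M
    & rho = \sum_l ((p l)%:C)%C *: (psi l *m adjmx (psi l))].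

(* C(rho) = min over ensembles of sum_l p_l F_1(family of psi_l), at the
   parameter value th (taken as infimum) *)
Definition cohQFI (n : nat) (Z : 'I_n -> 'M[C]_n) (th : 'I_n -> R)
  (rho : 'M[C]_n) : R :=
  inf [set x : R | exists k (p : 'I_k -> R) (psi : 'I_k -> 'cV[C]_n),
         is_ensemble rho p psi /\ x = \sum_l p l * QFI1 (fam Z (psi l)) th].

Definition phase_state (n : nat) (phi : 'I_n -> R) : 'cV[C]_n :=
  \col_j (((Num.sqrt (n%:R : R))^-1)%:C%C * expi (phi j)).

End QFI.

(* Main.v *)
Require Import Defs.
From mathcomp Require Import all_boot all_order all_algebra.
From mathcomp Require Import complex.
From mathcomp Require Import classical_sets boolp reals normedtype derive trigo realfun ring.
Import numFieldNormedType.Exports.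
Import Order.TTheory GRing.Theory Num.Theory.
Local Open Scope ring_scope.

Section A.
Variable R : realType.

Lemma is_derive_lin (a b x : R) : is_derive x 1 (fun t : R => a + t * b) b.
Proof.
have h : is_derive x (1:R) (fun t : R => t * b) (1 * b).
  have := is_deriveM (is_derive_id x (1:R)) (is_derive_cst b x (1:R)).
  by move=> h; apply: (is_derive_eq h); rewrite /GRing.scale /= mulr0 add0r mulr1 mul1r.
have := is_deriveD (is_derive_cst a x (1:R)) h.
by rewrite add0r mul1r.
Qed.

Lemma dcos (a b : R) : is_derive (0:R) 1 (fun t : R => cos (a + t * b)) (- sin a * b).
Proof.
have := is_derive1_comp (f := cos) (g := fun t : R => a + t * b) (x := 0) (is_derive_cos (a + 0 * b)) (is_derive_lin a b 0).
by rewrite mul0r addr0.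
Qed.

Lemma dsin (a b : R) : is_derive (0:R) 1 (fun t : R => sin (a + t * b)) (cos a * b).
Proof.
have := is_derive1_comp (f := sin) (g := fun t : R => a + t * b) (x := 0) (is_derive_sin (a + 0 * b)) (is_derive_lin a b 0).
by rewrite mul0r addr0.
Qed.

Lemma dRe (cr ci a b : R) :
  derive1 (fun t : R => cr * cos (a + t * b) - ci * sin (a + t * b)) 0
  = - (b * (cr * sin a + ci * cos a)).
Proof.
rewrite derive1E.
have H := is_deriveB (is_deriveZ cr (dcos a b)) (is_deriveZ ci (dsin a b)).
apply: (eq_trans (@derive_val _ _ _ _ _ _ _ H)); rewrite /GRing.scale /=.
ring.
Qed.

Lemma dIm (cr ci a b : R) :
  derive1 (fun t : R => cr * sin (a + t * b) + ci * cos (a + t * b)) 0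
  = b * (cr * cos a - ci * sin a).
Proof.
rewrite derive1E.
have H := is_deriveD (is_deriveZ cr (dsin a b)) (is_deriveZ ci (dcos a b)).
apply: (eq_trans (@derive_val _ _ _ _ _ _ _ H)); rewrite /GRing.scale /=.
ring.
Qed.

Local Notation C := R[i].

Lemma ReD (x y : C) : complex.Re (x + y) = complex.Re x + complex.Re y.
Proof. by case: x; case: y. Qed.
Lemma ImD (x y : C) : complex.Im (x + y) = complex.Im x + complex.Im y.
Proof. by case: x; case: y. Qed.
Lemma Re_sum (I : finType) (F : I -> C) : complex.Re (\sum_i F i) = \sum_i complex.Re (F i).
Proof. exact: (big_morph _ ReD). Qed.
Lemma Im_sum (I : finType) (F : I -> C) : complex.Im (\sum_i F i) = \sum_i complex.Im (F i).
Proof. exact: (big_morph _ ImD). Qed.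
Lemma ReRM (t : R) (z : C) : complex.Re ((t%:C)%C * z) = t * complex.Re z.
Proof. by case: z => a b /=; ring. Qed.

Lemma expiM_conj (x y : R) : expi x * (expi y)^* = expi (x - y).
Proof. rewrite /expi /= cosB sinB; congr (Complex _ _); ring. Qed.

Lemma expi_norm (x : R) : expi x * (expi x)^* = 1.
Proof. by rewrite expiM_conj subrr /expi cos0 sin0. Qed.

Lemma adjmxM m p q (A : 'M[C]_(m,p)) (B : 'M[C]_(p,q)) :
  adjmx (A *m B) = adjmx B *m adjmx A.
Proof.
apply/matrixP => i j; rewrite !mxE rmorph_sum; apply: eq_bigr => k _.
by rewrite !mxE rmorphM mulrC.
Qed.
Lemma adjmxK m p (A : 'M[C]_(m,p)) : adjmx (adjmx A) = A.
Proof. by apply/matrixP => i j; rewrite !mxE conjCK. Qed.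
Lemma adjmxD m p (A B : 'M[C]_(m,p)) : adjmx (A + B) = adjmx A + adjmx B.
Proof. by apply/matrixP => i j; rewrite !mxE rmorphD. Qed.
Lemma adjmxN m p (A : 'M[C]_(m,p)) : adjmx (- A) = - adjmx A.
Proof. by apply/matrixP => i j; rewrite !mxE rmorphN. Qed.
Lemma adjmxB m p (A B : 'M[C]_(m,p)) : adjmx (A - B) = adjmx A - adjmx B.
Proof. by rewrite adjmxD adjmxN. Qed.
Lemma adjmxZ m p (c : C) (A : 'M[C]_(m,p)) : adjmx (c *: A) = c^* *: adjmx A.
Proof. by apply/matrixP => i j; rewrite !mxE rmorphM. Qed.
Lemma adjmx_scalar m (a : C) : adjmx (a%:M : 'M[C]_m) = (a^*)%:M.
Proof. by apply/matrixP => i j; rewrite !mxE rmorphMn eq_sym. Qed.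


Section Fam.
Variables (n : nat) (Z : 'I_n -> 'M[C]_n).
Hypothesis Zdiag : forall j, is_diag_mx (Z j).
Hypothesis Zherm : forall j, adjmx (Z j) = Z j.

Definition sv (th : 'I_n -> R) a := complex.Re (gen Z th a a).

Lemma sv_sum th a : sv th a = \sum_i th i * complex.Re (Z i a a).
Proof.
rewrite /sv /gen summxE Re_sum; apply: eq_bigr => i _; by rewrite mxE ReRM.
Qed.

Lemma sv_upd th j t a : sv (upd th j t) a = sv th a + t * complex.Re (Z j a a).
Proof.
rewrite !sv_sum (bigD1 j) //= [in RHS](bigD1 j) //= /upd eqxx.
rewrite mulrDl -!addrA; congr (_ + _); rewrite addrC; congr (_ + _).
by apply: eq_bigr => i /negbTE ->.
Qed.

Definition phiv (psi : 'cV[C]_n) th := expi_diag (gen Z th) *m psi.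

Lemma phiv_entry psi th a k : phiv psi th a k = expi (sv th a) * psi a k.
Proof. by rewrite /phiv /expi_diag mul_diag_mx !mxE. Qed.

Lemma fam_phi psi th : fam Z psi th = phiv psi th *m adjmx (phiv psi th).
Proof. by rewrite /fam /phiv adjmxM !mulmxA. Qed.

Lemma fam_entry psi th a b :
  fam Z psi th a b = expi (sv th a - sv th b) * (psi a 0 * (psi b 0)^*).
Proof.
rewrite fam_phi mxE big_ord1 phiv_entry mxE phiv_entry rmorphM -expiM_conj.
by rewrite -!mulrA; congr (_ * _); rewrite mulrC -!mulrA; congr (_ * _); rewrite mulrC.
Qed.

Lemma herm_real (x : C) : x^* = x -> x = ((complex.Re x)%:C)%C.
Proof.
case: x => a b /= [] h; congr (Complex _ _).
have : b *+ 2 = 0 by rewrite mulr2n -{1}h addNr.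
by move/eqP; rewrite mulrn_eq0 /= => /eqP.
Qed.

Lemma Zreal j a : Z j a a = ((complex.Re (Z j a a))%:C)%C.
Proof. by apply: herm_real; rewrite -{2}(Zherm j) mxE. Qed.

Lemma Re_expiM x (c : C) : complex.Re (expi x * c) = complex.Re c * cos x - complex.Im c * sin x.
Proof. by case: c => cr ci /=; ring. Qed.
Lemma Im_expiM x (c : C) : complex.Im (expi x * c) = complex.Re c * sin x + complex.Im c * cos x.
Proof. by case: c => cr ci /=; ring. Qed.

Lemma pderivE psi th j :
  pderiv (fam Z psi) th j = 'i%C *: (Z j *m fam Z psi th - fam Z psi th *m Z j).
Proof.
have [d Zd] := diag_mxP _ (Zdiag j).
have Hl : Z j *m fam Z psi th = \matrix_(a,b) (Z j a a * fam Z psi th a b).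
  rewrite {1}Zd mul_diag_mx; apply/matrixP => a b; by rewrite !mxE Zd mxE eqxx mulr1n.
have Hr : fam Z psi th *m Z j = \matrix_(a,b) (fam Z psi th a b * Z j b b).
  rewrite {1}Zd mul_mx_diag; apply/matrixP => a b; by rewrite !mxE Zd mxE eqxx mulr1n.
rewrite Hl Hr; have FE := fam_entry psi th; move: FE; generalize (fam Z psi th) => F FE.
apply/matrixP => a b; rewrite /pderiv !mxE.
set c := psi a 0 * (psi b 0)^*.
set al := sv th a - sv th b.
set be := complex.Re (Z j a a) - complex.Re (Z j b b).
have E : forall t, sv (upd th j t) a - sv (upd th j t) b = al + t * be.
  by move=> t; rewrite !sv_upd /al /be; ring.
rewrite (_ : (fun t => complex.Re (fam Z psi (upd th j t) a b)) =
   (fun t => complex.Re c * cos (al + t * be) - complex.Im c * sin (al + t * be))); last first.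
  by apply: funext => t; rewrite fam_entry E Re_expiM.
rewrite (_ : (fun t => complex.Im (fam Z psi (upd th j t) a b)) =
   (fun t => complex.Re c * sin (al + t * be) + complex.Im c * cos (al + t * be))); last first.
  by apply: funext => t; rewrite fam_entry E Im_expiM.
rewrite dRe dIm !FE -/c -/al (Zreal j a) (Zreal j b) /be;
case: c => cr ci; rewrite /expi /=; congr (Complex _ _); ring.
Qed.

End Fam.

Section SLDsec.
Variable n : nat.

Lemma SLD_exists (phi : 'cV[C]_n) (A : 'M[C]_n) :
  adjmx phi *m phi = 1%:M -> adjmx A = A ->
  let rho := phi *m adjmx phi in
  let D := 'i%C *: (A *m rho - rho *m A) in
  is_SLD rho D (2%:R *: D).
Proof.
move=> hp hA rho D.
have hr : adjmx rho = rho by rewrite /rho adjmxM adjmxK.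
have hrr : rho *m rho = rho by rewrite /rho mulmxA -(mulmxA phi) hp mulmx1.
clearbody rho.
split.
  rewrite /D !adjmxZ adjmxB (adjmxM _ _ _ A rho) (adjmxM _ _ _ rho A) hr hA rmorph_nat.
  have -> : ('i%C)^* = - 'i%C :> C by apply/eqP; rewrite eq_complex /= oppr0 !eqxx.
  by rewrite scaleNr -scalerN opprB.
rewrite -!scalemxAl -!scalemxAr -scalerDr scalerA mulVf ?pnatr_eq0 // scale1r.
rewrite /D -scalerDr; congr (_ *: _).
rewrite mulmxBl mulmxBr -!mulmxA hrr !mulmxA hrr.
by rewrite addrA subrK.
Qed.

Lemma sld_val (phi : 'cV[C]_n) (A L : 'M[C]_n) :
  adjmx phi *m phi = 1%:M -> adjmx A = A ->
  is_SLD (phi *m adjmx phi) ('i%C *: (A *m (phi *m adjmx phi) - (phi *m adjmx phi) *m A)) L ->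
  \tr (L *m L *m (phi *m adjmx phi)) =
    4%:R * ((adjmx phi *m A *m A *m phi) 0 0 - ((adjmx phi *m A *m phi) 0 0) ^+ 2).
Proof.
move=> hp hA [hL hD].
set w := (adjmx phi *m A *m phi) 0 0.
have Hw : adjmx phi *m A *m phi = w%:M by apply: mx11_scalar.
have wr : w^* = w.
  have E : adjmx (adjmx phi *m A *m phi) = adjmx phi *m A *m phi.
    by rewrite !adjmxM adjmxK hA mulmxA.
  by have := congr1 (fun M : 'M[C]_1 => M 0 0) E; rewrite /= mxE.
have h2 : 2%:R *: ('i%C *: (A *m (phi *m adjmx phi) - phi *m adjmx phi *m A))
    = L *m (phi *m adjmx phi) + phi *m adjmx phi *m L.
  by rewrite hD scalerA mulfV ?pnatr_eq0 // scale1r.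
have e1 : L *m (phi *m adjmx phi) *m phi = L *m phi by rewrite -!mulmxA hp mulmx1.
have e2 : phi *m adjmx phi *m L *m phi = phi *m (adjmx phi *m L *m phi) by rewrite !mulmxA.
have e3 : A *m (phi *m adjmx phi) *m phi = A *m phi by rewrite -!mulmxA hp mulmx1.
have e4 : phi *m adjmx phi *m A *m phi = w *: phi by rewrite -mul_mx_scalar -Hw !mulmxA.
have h3 : L *m phi + phi *m (adjmx phi *m L *m phi) = 2%:R *: ('i%C *: (A *m phi - w *: phi)).
  have := congr1 (fun M => M *m phi) h2.
  by rewrite /= mulmxDl -!scalemxAl mulmxBl e1 e2 e3 e4 => <-.
set v := adjmx phi *m L *m phi.
have hv : v = 0.
  have := congr1 (fun M => adjmx phi *m M) h3.
  rewrite /= mulmxDr -!scalemxAr mulmxBr -scalemxAr !mulmxA hp mul1mx -/v Hw scalemx1 subrr.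
  rewrite !scaler0 => h4.
  have : 2%:R *: v = 0 by rewrite scaler_nat mulr2n.
  by move/eqP; rewrite scaler_eq0 pnatr_eq0 /= => /eqP.
move: h3; rewrite -/v hv mulmx0 addr0 scalerA => hu.
rewrite mulmxA mxtrace_mulC trace_mx11 !mulmxA.
have -> : adjmx phi *m L = adjmx (L *m phi) by rewrite adjmxM hL.
rewrite -mulmxA hu adjmxZ -scalemxAl -scalemxAr scalerA mxE.
have -> : (2%:R * 'i%C)^* * (2%:R * 'i%C) = 4%:R :> C.
  by rewrite rmorphM rmorph_nat; apply/eqP; rewrite eq_complex /=; apply/andP; split; apply/eqP; ring.
congr (_ * _).
rewrite adjmxB adjmxZ adjmxM hA mulmxBl !mulmxBr -!scalemxAl -!scalemxAr.
rewrite !mulmxA hp Hw !mxE /= wr.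
by rewrite mulr1n mulr1 subrr subr0 expr2.
Qed.
End SLDsec.

Definition pr (x : C) : R := complex.Re x ^+ 2 + complex.Im x ^+ 2.
Lemma prE (x : C) : x^* * x = ((pr x)%:C)%C.
Proof. by case: x => a b; rewrite /pr /=; congr (Complex _ _); ring. Qed.
Lemma pr_ge0 x : 0 <= pr x.
Proof. by rewrite /pr addr_ge0 // sqr_ge0. Qed.


Lemma bnd (n : nat) (p : 'I_n -> R) : (0 < n)%N -> (forall a, 0 <= p a) -> \sum_a p a = 1 ->
  0 <= n%:R^-1 * (4%:R * (1 - \sum_a p a ^+ 2)) <= 4%:R * (n%:R - 1) / n%:R ^+ 2.
Proof.
move=> hn hp hs.
have nz : (n%:R : R) != 0 by rewrite pnatr_eq0 -lt0n.
have npos : (0 : R) < n%:R by rewrite ltr0n.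
have le1 : forall a, p a <= 1.
  move=> a; rewrite -hs (bigD1 a) //= lerDl; exact: sumr_ge0.
have s1 : \sum_a p a ^+ 2 <= 1.
  rewrite -hs; apply: ler_sum => a _; rewrite expr2; exact: ler_piMl.
have s2 : n%:R^-1 <= \sum_a p a ^+ 2.
  have h : 0 <= \sum_a (p a - n%:R^-1) ^+ 2 by apply: sumr_ge0 => a _; exact: sqr_ge0.
  have e : \sum_a (p a - n%:R^-1) ^+ 2 = \sum_a p a ^+ 2 - n%:R^-1.
    rewrite (eq_bigr (fun a => p a ^+ 2 - (2%:R * n%:R^-1) * p a + n%:R^-1 ^+ 2)); last first.
      by move=> a _; rewrite sqrrB; ring.
    rewrite big_split sumrB /= -mulr_sumr hs sumr_const card_ord.
    by field.
  by move: h; rewrite e subr_ge0.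
apply/andP; split.
  by rewrite mulr_ge0 // ?invr_ge0 ?ler0n // mulr_ge0 ?ler0n // subr_ge0.
have -> : 4%:R * (n%:R - 1) / n%:R ^+ 2 = n%:R^-1 * (4%:R * (1 - n%:R^-1)) :> R by field.
rewrite ler_wpM2l ?invr_ge0 ?ler0n // ler_wpM2l ?ler0n //.
by rewrite lerB.
Qed.


Lemma adjmxE m p (A : 'M[C]_(m,p)) i j : adjmx A i j = (A j i)^*.
Proof. by rewrite mxE. Qed.

Lemma conjR (x : R) : (((x%:C)%C : C)^*) = (x%:C)%C.
Proof. exact: conjc_real. Qed.

Lemma mulcJ_ge0' (x : C) : 0 <= x^* * x.
Proof. by rewrite mulrC mulcJ_ge0. Qed.

Section Ens.
Variable n : nat.

Lemma ens_parallel (psi : 'cV[C]_n) k (p : 'I_k -> R) (ps : 'I_k -> 'cV[C]_n) :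
  adjmx psi *m psi = 1%:M -> is_ensemble (psi *m adjmx psi) p ps ->
  forall l, p l = 0 \/ exists w : C, w^* * w = 1 /\ ps l = w *: psi.
Proof.
move=> hp [hp0 hs hn hrho] l.
pose w l := (adjmx psi *m ps l) 0 0.
pose e l := ps l - w l *: psi.
have h1 : forall l, (adjmx (ps l) *m psi) 0 0 = (w l)^*.
  move=> l'; have E : adjmx (adjmx psi *m ps l') = adjmx (ps l') *m psi.
    by rewrite adjmxM adjmxK.
  by rewrite -E mxE.
have he : forall l, (adjmx (e l) *m e l) 0 0 = 1 - w l * (w l)^*.
  move=> l'; rewrite /e adjmxB adjmxZ mulmxBl !mulmxBr -!scalemxAl -!scalemxAr hn hp.
  rewrite (mx11_scalar (adjmx (ps l') *m psi)) h1 (mx11_scalar (adjmx psi *m ps l')) -/(w l').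
  rewrite !mxE /= !mulr1n; ring.
have hww : forall l, w l * (w l)^* = (adjmx psi *m (ps l *m adjmx (ps l)) *m psi) 0 0.
  move=> l'; rewrite mulmxA -mulmxA (mx11_scalar (adjmx (ps l') *m psi)) h1.
  by rewrite mul_mx_scalar mxE mulrC.
have hsum : \sum_l ((p l)%:C)%C * (w l * (w l)^*) = 1.
  have : (adjmx psi *m (psi *m adjmx psi) *m psi) 0 0 = 1.
    by rewrite mulmxA hp mul1mx hp mxE.
  rewrite hrho mulmx_sumr mulmx_suml summxE => <-; apply: eq_bigr => l1 _.
  by rewrite hww -scalemxAr -scalemxAl [RHS]mxE.
have hsum2 : \sum_l ((p l)%:C)%C * (adjmx (e l) *m e l) 0 0 = 0.
  under eq_bigr do rewrite he mulrBr mulr1.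
  by rewrite sumrB hsum -rmorph_sum hs rmorph1 subrr.
have pos : forall l, 0 <= (adjmx (e l) *m e l) 0 0.
  move=> l'; rewrite mxE; apply: sumr_ge0 => a _; rewrite mxE prE ler0c; exact: pr_ge0.
have pc : forall l, 0 <= ((p l)%:C)%C :> C by move=> l'; rewrite ler0c.
have := psumr_eq0P (P := predT) (fun l _ => mulr_ge0 (pc l) (pos l)) hsum2 (i := l) erefl.
move/eqP; rewrite mulf_eq0 => /orP [/eqP [] ->|/eqP h0]; first by left.
right; exists (w l); split.
  by move: (he l); rewrite h0 => /eqP; rewrite eq_sym subr_eq0 mulrC => /eqP.
have hs0 : \sum_a (e l a 0)^* * e l a 0 = (adjmx (e l) *m e l) 0 0.
  by rewrite [RHS]mxE; apply: eq_bigr => a _; rewrite adjmxE.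
rewrite h0 in hs0; apply/matrixP => a b; rewrite ord1.
have := psumr_eq0P (P := predT) (fun a _ => mulcJ_ge0' (e l a 0)) hs0 (i := a) erefl.
move/eqP; rewrite mulf_eq0 conjc_eq0 orbb /e !mxE subr_eq0 => /eqP ->.
by [].
Qed.
End Ens.
Section Main.
Variables (n : nat) (Z : 'I_n -> 'M[C]_n).
Hypothesis Zdiag : forall j, is_diag_mx (Z j).
Hypothesis Zherm : forall j, adjmx (Z j) = Z j.
Hypothesis Zorth : forall j k, \tr (Z j *m Z k) = (j == k)%:R.

Lemma Zentry j a b : Z j a b = (a == b)%:R * Z j a a.
Proof.
have [d ->] := diag_mxP _ (Zdiag j); rewrite !mxE eqxx mulr1n.
by case: eqP => [->|_]; rewrite ?mul1r ?mul0r ?mulr0n.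
Qed.

Lemma Zcol a b : \sum_j Z j a a * Z j b b = (a == b)%:R.
Proof.
pose M := \matrix_(j, a) Z j a a.
have h : M *m M^T = 1%:M.
  apply/matrixP => j k; rewrite !mxE -Zorth /mxtrace; apply: eq_bigr => a' _.
  rewrite !mxE (bigD1 a') //= big1 ?addr0; last first.
    by move=> c /negbTE hc; rewrite (Zentry j) eq_sym hc mul0r mul0r.
  by [].
have h2 := mulmx1C h. have := congr1 (fun X : 'M[C]_n => X a b) h2.
by rewrite !mxE /= => <-; apply: eq_bigr => j _; rewrite !mxE.
Qed.

Lemma quad_diag (phi : 'cV[C]_n) (A : 'M[C]_n) :
  (forall a b, A a b = (a == b)%:R * A a a) ->
  (adjmx phi *m A *m phi) 0 0 = \sum_a A a a * ((phi a 0)^* * phi a 0).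
Proof.
move=> hA; rewrite mxE; apply: eq_bigr => a _.
rewrite mxE (bigD1 a) //= big1 ?addr0; last first.
  by move=> c /negbTE hc; rewrite (hA c) hc mul0r mulr0.
by rewrite !mxE mulrCA mulrA.
Qed.

Local Notation phv := (phiv n Z).

Lemma ZZ j a b : (Z j *m Z j) a b = (a == b)%:R * (Z j a a * Z j a a).
Proof.
rewrite mxE (bigD1 a) //= big1 ?addr0; last first.
  by move=> c /negbTE hc; rewrite (Zentry j a c) eq_sym hc mul0r mul0r.
rewrite (Zentry j a b); case: eqP => [->|_]; rewrite ?mul1r //.
by rewrite !mul0r mulr0.
Qed.

Lemma phiv_q psi th a :
  (phv psi th a 0)^* * phv psi th a 0 = ((pr (psi a 0))%:C)%C.
Proof.
rewrite (phiv_entry n Z) rmorphM mulrACA [_^* * _]mulrC expi_norm mul1r; exact: prE.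
Qed.

Lemma sum_pr (psi : 'cV[C]_n) : adjmx psi *m psi = 1%:M -> \sum_a pr (psi a 0) = 1.
Proof.
move=> hp; have := congr1 (fun X : 'M[C]_1 => X 0 0) hp; rewrite /= !mxE /=.
under eq_bigr do rewrite mxE prE.
by rewrite -rmorph_sum => -[].
Qed.

Lemma phiv_norm (psi : 'cV[C]_n) th : adjmx psi *m psi = 1%:M ->
  adjmx (phv psi th) *m phv psi th = 1%:M.
Proof.
move=> hp; rewrite -hp; apply/matrixP => i j; rewrite !ord1.
rewrite !mxE; apply: eq_bigr => a _; rewrite !mxE.
have := phiv_q psi th a; rewrite mxE => ->; by rewrite prE.
Qed.

Lemma QFI1_val (psi : 'cV[C]_n) th : adjmx psi *m psi = 1%:M ->
  QFI1 (fam Z psi) th = n%:R^-1 * (4%:R * (1 - \sum_a (pr (psi a 0)) ^+ 2)).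
Proof.
move=> hp.
set phi := phv psi th.
have hphi : adjmx phi *m phi = 1%:M by apply: phiv_norm.
have Hj : forall j, \tr (SLD (fam Z psi th) (pderiv (fam Z psi) th j) *m
     SLD (fam Z psi th) (pderiv (fam Z psi) th j) *m fam Z psi th)
   = 4%:R * ((adjmx phi *m Z j *m Z j *m phi) 0 0 - ((adjmx phi *m Z j *m phi) 0 0) ^+ 2).
  move=> j; rewrite (pderivE n Z Zdiag Zherm) (fam_phi n Z) -/phi.
  apply: sld_val => //; apply: xgetPex.
  by eexists; exact: (SLD_exists _ _ _ hphi (Zherm j)).
rewrite /QFI1 /mxtrace; congr (_ * _).
under eq_bigr do rewrite mxE Hj.
pose q a := ((pr (psi a 0))%:C)%C.
have d1 : forall j, (adjmx phi *m Z j *m Z j *m phi) 0 0 = \sum_a (Z j a a * Z j a a) * q a.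
  move=> j; rewrite -(mulmxA (adjmx phi) (Z j) (Z j)) quad_diag.
    by apply: eq_bigr => a _; rewrite ZZ eqxx mul1r /phi phiv_q.
  by move=> a b; rewrite !ZZ eqxx mul1r.
have d2 : forall j, (adjmx phi *m Z j *m phi) 0 0 = \sum_a Z j a a * q a.
  move=> j; rewrite quad_diag.
    by apply: eq_bigr => a _; rewrite /phi phiv_q.
  exact: Zentry.
under eq_bigr do rewrite d1 d2.
rewrite -Re_sum -mulr_sumr sumrB.
have s1 : \sum_j \sum_a Z j a a * Z j a a * q a = \sum_a q a.
  rewrite exchange_big; apply: eq_bigr => a _.
  by rewrite -mulr_suml Zcol eqxx mul1r.
have s2 : \sum_j (\sum_a Z j a a * q a) ^+ 2 = \sum_a q a * q a.
  under eq_bigr do rewrite expr2 mulr_suml.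
  under eq_bigr do under eq_bigr do rewrite mulr_sumr.
  rewrite exchange_big; apply: eq_bigr => a _; rewrite exchange_big /=.
  rewrite (bigD1 a) //= [X in _ + X]big1 ?addr0.
    under eq_bigr do rewrite mulrACA.
    by rewrite -mulr_suml Zcol eqxx mul1r.
  move=> b /negbTE hb.
  under eq_bigr do rewrite mulrACA.
  by rewrite -mulr_suml Zcol eq_sym hb mul0r.
rewrite s1 s2.
have -> : \sum_a q a = 1 by rewrite -rmorph_sum sum_pr.
have -> : \sum_a q a * q a = ((\sum_a pr (psi a 0) ^+ 2)%:C)%C.
  by rewrite rmorph_sum; apply: eq_bigr => a _; rewrite expr2 rmorphM.
have -> : (4%:R * (1 - ((\sum_a pr (psi a 0) ^+ 2)%:C)%C) : C) = ((4%:R * (1 - \sum_a pr (psi a 0) ^+ 2))%:C)%C.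
  by rewrite rmorphM rmorphB rmorph1 rmorph_nat.
by [].
Qed.

Hypothesis hn : (0 < n)%N.
Variable th : 'I_n -> R.
Local Notation B := (4%:R * (n%:R - 1) / n%:R ^+ 2 : R).

Lemma QFI1_bnd (psi : 'cV[C]_n) : adjmx psi *m psi = 1%:M ->
  0 <= QFI1 (fam Z psi) th <= B.
Proof. move=> hp; rewrite QFI1_val //; exact: (bnd n (fun a => pr (psi a 0)) hn (fun a => pr_ge0 _) (sum_pr psi hp)). Qed.

Lemma QFI1_flat (psi : 'cV[C]_n) : adjmx psi *m psi = 1%:M ->
  (forall a, pr (psi a 0) = n%:R^-1) -> QFI1 (fam Z psi) th = B.
Proof.
move=> hp h; rewrite QFI1_val //.
under eq_bigr do rewrite h.
have nz : (n%:R : R) != 0 by rewrite pnatr_eq0 -lt0n.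
rewrite sumr_const card_ord -mulr_natr; field; exact: nz.
Qed.

Lemma pr_phase (phi : 'I_n -> R) a : pr (phase_state phi a 0) = n%:R^-1.
Proof.
rewrite /pr mxE /= !mul0r subr0 addr0 !exprMn -mulrDr cos2Dsin2 mulr1.
by rewrite exprVn sqr_sqrtr ?ler0n.
Qed.

Lemma phase_norm (phi : 'I_n -> R) :
  adjmx (phase_state phi) *m phase_state phi = 1%:M.
Proof.
have nz : (n%:R : R) != 0 by rewrite pnatr_eq0 -lt0n.
apply/matrixP => i j; rewrite !ord1 [LHS]mxE [RHS]mxE /=.
rewrite (eq_bigr (fun _ => ((n%:R^-1)%:C)%C)); last first.
  by move=> a _; rewrite adjmxE prE pr_phase.
rewrite sumr_const card_ord -rmorphMn -mulr_natr mulVf //.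
Qed.

Lemma pr_scale (w x : C) : w^* * w = 1 -> pr (w * x) = pr x.
Proof.
move=> hw; apply: complexI; rewrite -!prE rmorphM mulrACA hw mul1r //.
Qed.

Lemma main_aux :
  (forall rho : 'M[C]_n, is_state rho -> 0 <= cohQFI Z th rho <= B) /\
  (forall phi : 'I_n -> R,
     cohQFI Z th (phase_state phi *m adjmx (phase_state phi)) = B).
Proof.
have B0 : 0 <= B.
  by rewrite mulr_ge0 ?invr_ge0 ?exprn_ge0 ?ler0n // mulr_ge0 ?ler0n // subr_ge0 ler1n.
split.
  move=> rho _; rewrite /cohQFI.
  set E := [set x : R | _]%classic.
  have Eb : forall x, E x -> 0 <= x <= B.
    move=> x [k [p [ps [[hp0 hs hn' hrho] ->]]]].
    apply/andP; split.
      apply: sumr_ge0 => l _; apply: mulr_ge0 => //.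
      by case/andP: (QFI1_bnd _ (hn' l)).
    apply: (@le_trans _ _ (\sum_l p l * B)).
      apply: ler_sum => l _; apply: ler_wpM2l => //.
      by case/andP: (QFI1_bnd _ (hn' l)).
    by rewrite -mulr_suml hs mul1r.
  case: (pselect (exists x, E x)) => [[x0 Ex0]|nE].
    have lb : lbound E 0 by move=> y /Eb /andP[].
    apply/andP; split; first exact: (lb_le_inf (ex_intro _ x0 Ex0) lb).
    apply: (@le_trans _ _ x0); first by apply: ge_inf => //; exists 0.
    by case/andP: (Eb _ Ex0).
  have -> : E = set0.
    by apply/seteqP; split => x // Ex; apply: nE; exists x.
  by rewrite inf0 lexx B0.
move=> phi; rewrite /cohQFI.
set E := [set x : R | _]%classic.
set psi := phase_state phi.
have hp := phase_norm phi.
have Eb : forall x, E x -> x = B.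
  move=> x [k [p [ps [hE ->]]]].
  have hE' := hE; case: hE' => [hp0 hs hn' hrho].
  rewrite (_ : B = \sum_l p l * B); last by rewrite -mulr_suml hs mul1r.
  apply: eq_bigr => l _.
  case: (ens_parallel _ _ _ _ _ hp hE l) => [->|[w [hw Ew]]]; first by rewrite !mul0r.
  congr (_ * _); apply: QFI1_flat; first exact: hn' l.
  by move=> a; rewrite Ew mxE pr_scale // pr_phase.
have EB : E B.
  exists 1%N, (fun _ => 1), (fun _ => psi); split.
    split.
    - by move=> _; exact: ler01.
    - by rewrite big_ord1.
    - by move=> _; exact: hp.
    - by rewrite big_ord1 rmorph1 scale1r.
  by rewrite big_ord1 mul1r QFI1_flat // => a; exact: pr_phase.
apply/eqP; rewrite eq_le; apply/andP; split.
  by apply: ge_inf => //; exists B => y /Eb ->.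
by apply: lb_le_inf; [exists B | move=> y /Eb ->].
Qed.

End Main.
End A.

Theorem mainTheorem8 (R : realType) (n : nat) (hn : (0 < n)%N)
  (Z : 'I_n -> 'M[R[i]]_n)
  (Zdiag : forall j, is_diag_mx (Z j))
  (Zherm : forall j, adjmx (Z j) = Z j)
  (Zorth : forall j k, \tr (Z j *m Z k) = (j == k)%:R)
  (th : 'I_n -> R) :
  (forall rho : 'M[R[i]]_n, is_state rho ->
     0 <= cohQFI Z th rho <= 4 * (n%:R - 1) / n%:R ^+ 2) /\
  (forall phi : 'I_n -> R,
     cohQFI Z th (phase_state phi *m adjmx (phase_state phi))
       = 4 * (n%:R - 1) / n%:R ^+ 2).
Proof.
exact: (main_aux R n Z Zdiag Zherm Zorth hn th).
Qed.
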